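(* Let $\mathcal A\in Sp(2d,\mathbb R)$ be written in $d\times d$ blocks as $\mathcal A=(A_{ij})_{i,j=1}^4$. Then $$W_{\mathcal A}(\pi(z)f,\pi(z)g)=T_zW_{\mathcal A}(f,g)\qquad\text{for all } f,g\in\mathcal S(\mathbb R^d),\ z\in\mathbb R^{2d}$$ holds if and only if $$\mathcal A=\begin{pmatrix}A_{11}&I-A_{11}&A_{13}&A_{13}\\ A_{21}&-A_{21}&I-A_{11}^T&-A_{11}^T\\ 0&0&I&I\\ -I&I&0&0\end{pmatrix}$$ with $A_{13}=A_{13}^T$ and $A_{21}=A_{21}^T$ (here $I=I_{d\times d}$, $0=0_{d\times d}$). This does not depend on the choice of phase factor in $\mu(\mathcal A)$.
   Context: For $z=(z_1,z_2)\in\mathbb R^d\times\mathbb R^d$: $T_{z_1}f(t)=f(t-z_1)$, $M_{z_2}f(t)=e^{2\pi i z_2\cdot t}f(t)$, $\pi(z)=M_{z_2}T_{z_1}$; for $F$ on $\mathbb R^{2d}$, $T_zF(w)=F(w-z)$. $Sp(n,\mathbb R)=\{\mathcal A\in GL(2n,\mathbb R):\mathcal A^TJ\mathcal A=J\}$, $J=\begin{pmatrix}0&I_n\\-I_n&0\end{pmatrix}$. The metaplectic representation $\mu$ assigns to $\mathcal A\in Sp(n,\mathbb R)$ a unitary operator on $L^2(\mathbb R^n)$ (extending to $\mathcal S$ and $\mathcal S'$), defined up to a unimodular constant, normalized so that up to unimodular constants $\mu(J)$ is the Fourier transform, $\mu\begin{pmatrix}M^{-1}&0\\0&M^T\end{pmatrix}F(x)=|\det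 M|^{1/2}F(Mx)$, $\mu\begin{pmatrix}I&C\\0&I\end{pmatrix}F(x)=e^{i\pi Cx\cdot x}F(x)$ ($C$ symmetric). For $\mathcal A\in Sp(2d,\mathbb R)$, $W_{\mathcal A}(f,g)=\mu(\mathcal A)(f\otimes\bar g)$, $(f\otimes\bar g)(x,y)=f(x)\overline{g(y)}$. A matrix of the displayed form is called covariant. *)

(* Defs.v *)
From HB Require Import structures.
From mathcomp Require Import all_boot all_order all_algebra.
From mathcomp Require Import all_classical all_reals all_analysis.
From mathcomp Require Import complex.

Set Implicit Arguments.
Unset Strict Implicit.
Unset Printing Implicit Defensive.

Import Order.TTheory GRing.Theory Num.Theory.
Import numFieldNormedType.Exports.
Local Open Scope ring_scope.

Section TF.
Variable R : realType.

(* points of R^n are column vectors 'cV[R]_n; R^(n+n) = col_mx x xi *)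
Definition dotp (n : nat) (x y : 'cV[R]_n) : R := \sum_(i < n) x i 0 * y i 0.

Definition cis (t : R) : R[i] := Complex (cos t) (sin t).

Definition Tr (n : nat) (a : 'cV[R]_n) (F : 'cV[R]_n -> R[i]) : 'cV[R]_n -> R[i] :=
  fun t => F (t - a).

Definition Mod (n : nat) (b : 'cV[R]_n) (F : 'cV[R]_n -> R[i]) : 'cV[R]_n -> R[i] :=
  fun t => cis (2 * pi * dotp b t) * F t.

Definition tfshift (n : nat) (z : 'cV[R]_(n + n)) (F : 'cV[R]_n -> R[i]) :=
  Mod (dsubmx z) (Tr (usubmx z) F).

(* symmetric Schroedinger representation rho(z) = e^{-pi i z1.z2} pi(z) *)
Definition rho (n : nat) (z : 'cV[R]_(n + n)) (F : 'cV[R]_n -> R[i]) :=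
  fun t => cis (- pi * dotp (usubmx z) (dsubmx z)) * tfshift z F t.

Definition unitv (n : nat) (i : 'I_n) : 'cV[R]_n := delta_mx i 0.

Definition iterD (n : nat) (s : seq 'I_n) (g : 'cV[R]_n -> R) : 'cV[R]_n -> R :=
  foldr (fun i h => (fun x => 'D_(unitv i) h x)) g s.

Definition schwartz_real (n : nat) (g : 'cV[R]_n -> R) : Prop :=
  (forall (s : seq 'I_n) (i : 'I_n) (x : 'cV[R]_n),
      derivable (iterD s g) x (unitv i)) /\
  (forall (s : seq 'I_n) (k : nat), exists M : R, forall x : 'cV[R]_n,
      (1 + `|x|) ^+ k * `|iterD s g x| <= M).

Definition Schwartz (n : nat) (F : 'cV[R]_n -> R[i]) : Prop :=
  schwartz_real (fun x => complex.Re (F x)) /\ schwartz_real (fun x => complex.Im (F x)).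

Definition tens (d : nat) (f g : 'cV[R]_d -> R[i]) : 'cV[R]_(d + d) -> R[i] :=
  fun x => f (usubmx x) * conjc (g (dsubmx x)).

Definition Jmx (n : nat) : 'M[R]_(n + n) := block_mx 0 1%:M (- 1%:M) 0.

Definition symplectic (n : nat) (A : 'M[R]_(n + n)) : Prop :=
  A^T *m Jmx n *m A = Jmx n.

(* U is a metaplectic operator for A (i.e. U = mu(A) for some choice of the
   phase): U is a linear bijection of S(R^n) onto itself intertwining the
   Schroedinger representation: U rho(z) = rho(A z) U. *)
Definition metaplectic (n : nat) (A : 'M[R]_(n + n))
    (U : ('cV[R]_n -> R[i]) -> ('cV[R]_n -> R[i])) : Prop :=
  [/\ forall F G (a b : R[i]), Schwartz F -> Schwartz G ->
        U (fun t => a * F t + b * G t) = (fun t => a * U F t + b * U G t),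
      forall F, Schwartz F -> Schwartz (U F),
      forall F G, Schwartz F -> Schwartz G -> U F = U G -> F = G,
      forall G, Schwartz G -> exists2 F, Schwartz F & U F = G
    & forall (z : 'cV[R]_(n + n)) F, Schwartz F -> U (rho z F) = rho (A *m z) (U F)].

Definition covariant_form (d : nat) (A11 A13 A21 : 'M[R]_d)
  : 'M[R]_((d + d) + (d + d)) :=
  block_mx (block_mx A11 (1%:M - A11) A21 (- A21))
           (block_mx A13 A13 (1%:M - A11^T) (- A11^T))
           (block_mx 0 0 (- 1%:M) 1%:M)
           (block_mx 1%:M 1%:M 0 0).

End TF.

(* Main.v *)
Require Import Defs.
From HB Require Import structures.
From mathcomp Require Import all_boot all_order all_algebra.
From mathcomp Require Import all_classical all_reals all_analysis.
From mathcomp Require Import complex.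
From mathcomp Require Import ring lra.
Import Order.TTheory GRing.Theory Num.Theory.
Import numFieldNormedType.Exports.
Local Open Scope ring_scope.
Set Implicit Arguments. Unset Strict Implicit. Unset Printing Implicit Defensive.
Local Open Scope classical_set_scope.
Local Open Scope ring_scope.
Local Notation iD := Defs.iterD.

Section P1.
Variable R : realType.

Lemma cis0 : cis (0 : R) = 1.
Proof. by rewrite /cis cos0 sin0. Qed.

Lemma cisD (a b : R) : cis (a + b) = cis a * cis b.
Proof.
rewrite /cis cosD sinD; apply/eqP; rewrite eq_complex /=; apply/andP; split;
  apply/eqP; ring.
Qed.

Lemma conj_cis (a : R) : conjc (cis a) = cis (- a).
Proof. by rewrite /cis cosN sinN. Qed.

Lemma cisN_mul (a : R) : cis a * cis (- a) = 1.
Proof. by rewrite -cisD subrr cis0. Qed.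

Lemma cis_eq1 (a : R) : cis a = 1 -> sin a = 0.
Proof. by case. Qed.

Lemma dotp_col n m (a : 'cV[R]_n) (b : 'cV[R]_m) x :
  dotp (col_mx a b) x = dotp a (usubmx x) + dotp b (dsubmx x).
Proof.
rewrite /dotp big_split_ord /=; congr (_ + _); apply: eq_bigr => i _;
  by rewrite ?col_mxEu ?col_mxEd !mxE.
Qed.

Lemma dotp0l n (x : 'cV[R]_n) : dotp 0 x = 0.
Proof. by rewrite /dotp big1 // => i _; rewrite mxE mul0r. Qed.

Lemma dotp0r n (x : 'cV[R]_n) : dotp x 0 = 0.
Proof. by rewrite /dotp big1 // => i _; rewrite mxE mulr0. Qed.

Lemma dotpNl n (x y : 'cV[R]_n) : dotp (- x) y = - dotp x y.
Proof. by rewrite /dotp -sumrN; apply: eq_bigr => i _; rewrite mxE mulNr. Qed.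

Lemma dotpDr n (x y z : 'cV[R]_n) : dotp x (y + z) = dotp x y + dotp x z.
Proof. by rewrite /dotp -big_split; apply: eq_bigr => i _; rewrite mxE mulrDr. Qed.

Lemma dotpBr n (x y z : 'cV[R]_n) : dotp x (y - z) = dotp x y - dotp x z.
Proof.
rewrite /dotp -sumrB; apply: eq_bigr => i _; rewrite !mxE mulrDr mulrN //.
Qed.

Lemma dotpDl n (x y z : 'cV[R]_n) : dotp (x + y) z = dotp x z + dotp y z.
Proof. by rewrite /dotp -big_split; apply: eq_bigr => i _; rewrite mxE mulrDl. Qed.

Lemma dotpNr n (x y : 'cV[R]_n) : dotp x (- y) = - dotp x y.
Proof. by rewrite /dotp -sumrN; apply: eq_bigr => i _; rewrite mxE mulrN. Qed.

Lemma conjM (a b : R[i]) : conjc (a * b) = conjc a * conjc b.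
Proof.
case: a => a1 a2; case: b => b1 b2; apply/eqP; rewrite eq_complex /=.
apply/andP; split; apply/eqP; ring.
Qed.

Lemma dotpC n (x y : 'cV[R]_n) : dotp x y = dotp y x.
Proof. by rewrite /dotp; apply: eq_bigr => i _; rewrite mulrC. Qed.

Definition wvec d (z : 'cV[R]_(d + d)) : 'cV[R]_((d + d) + (d + d)) :=
  col_mx (col_mx (usubmx z) (usubmx z)) (col_mx (dsubmx z) (- dsubmx z)).

Lemma tens_shift d (f g : 'cV[R]_d -> R[i]) z :
  tens (tfshift z f) (tfshift z g) = rho (wvec z) (tens f g).
Proof.
apply: funext => x.
rewrite /rho /tens /tfshift /Mod /Tr /wvec col_mxKu col_mxKd.
rewrite dotp_col !col_mxKu !col_mxKd dotpNr subrr mulr0 cis0 mul1r.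
rewrite dotp_col dotpNl.
rewrite linearB /= linearB /= col_mxKu col_mxKd.
rewrite conjM conj_cis.
by rewrite mulrBr cisD; ring.
Qed.

Lemma Tr_rho n (z : 'cV[R]_n) (G : 'cV[R]_n -> R[i]) :
  Tr z G = rho (col_mx z 0) G.
Proof.
apply: funext => t; rewrite /rho /tfshift /Mod /Tr col_mxKu col_mxKd.
by rewrite dotp0r dotp0l !mulr0 cis0 !mul1r.
Qed.

End P1.

Section P2.
Variable R : realType.

Definition form n m (X Y : 'M[R]_(n + n, m)) := X^T *m Jmx R n *m Y.

Lemma formE n m (X1 Y1 X2 Y2 : 'M[R]_(n, m)) :
  form (col_mx X1 Y1) (col_mx X2 Y2) = X1^T *m Y2 - Y1^T *m X2.
Proof.
rewrite /form /Jmx tr_col_mx mul_row_block !mulmx0 !mulmx1 add0r addr0.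
by rewrite mul_row_col mulmxN mulmx1 mulNmx addrC.
Qed.

Lemma form_sympl n m (A : 'M[R]_(n + n)) (X Y : 'M[R]_(n + n, m)) :
  symplectic A -> form (A *m X) (A *m Y) = form X Y.
Proof.
move=> SA; rewrite /form trmx_mul !mulmxA.
have -> : X^T *m A^T *m Jmx R n *m A = X^T *m (A^T *m Jmx R n *m A) by rewrite !mulmxA.
by rewrite SA.
Qed.

Lemma mx_ext_vec n m (M N : 'M[R]_(n, m)) :
  (forall u : 'cV[R]_m, M *m u = N *m u) -> M = N.
Proof.
move=> H; apply/matrixP => i j.
have := H (delta_mx j 0); rewrite -!colE => /matrixP /(_ i 0).
by rewrite !mxE.
Qed.

Lemma cov_w d (A11 A13 A21 : 'M[R]_d) (z : 'cV[R]_(d + d)) :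
  A13^T = A13 -> A21^T = A21 ->
  covariant_form A11 A13 A21 *m wvec z = col_mx z 0.
Proof.
move=> _ _; rewrite /covariant_form /wvec !mul_block_col.
set z1 := usubmx z; set z2 := dsubmx z.
rewrite !(mulmxN, mul0mx, mul1mx, addr0, add0r, mulmxBl).
rewrite !add_col_mx.
have -> : z = col_mx z1 z2 by rewrite vsubmxK.
have -> : (0 : 'cV[R]_(d+d)) = col_mx 0 0 by rewrite col_mx0.
congr (col_mx (col_mx _ _) (col_mx _ _)).
all: rewrite ?mulNmx ?mul1mx.
- by rewrite subrr addr0 addrC subrK.
- by rewrite addrN add0r opprK subrK.
- by rewrite subrr add0r.
- by rewrite addNr addr0.
Qed.


Definition i1 d : 'M[R]_((d+d)+(d+d), d) := col_mx (col_mx 1%:M 0) 0.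
Definition i2 d : 'M[R]_((d+d)+(d+d), d) := col_mx (col_mx 0 1%:M) 0.
Definition i3 d : 'M[R]_((d+d)+(d+d), d) := col_mx 0 (col_mx 1%:M 0).
Definition i4 d : 'M[R]_((d+d)+(d+d), d) := col_mx 0 (col_mx 0 1%:M).

Lemma split4 d (M : 'M[R]_((d+d)+(d+d), d)) :
  exists a b c e, M = col_mx (col_mx a b) (col_mx c e).
Proof.
by exists (usubmx (usubmx M)), (dsubmx (usubmx M)), (usubmx (dsubmx M)),
  (dsubmx (dsubmx M)); rewrite !vsubmxK.
Qed.

Lemma id_split d :
  (1%:M : 'M[R]_((d+d)+(d+d))) = row_mx (row_mx (i1 d) (i2 d)) (row_mx (i3 d) (i4 d)).
Proof.
rewrite /i1 /i2 /i3 /i4 (scalar_mx_block (d+d) (d+d)) block_mxEh.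
rewrite (scalar_mx_block d d) -!col_mx0 -!row_mx0 -!block_mxEh.
by rewrite !block_mxEh.
Qed.

Lemma trN n m (M : 'M[R]_(n, m)) : (- M)^T = - M^T.
Proof. by rewrite linearN. Qed.

Lemma col_rowE m1 m2 n1 n2 (a : 'M[R]_(m1, n1)) (b : 'M[R]_(m1, n2))
  (c : 'M[R]_(m2, n1)) (e : 'M[R]_(m2, n2)) :
  col_mx (row_mx a b) (row_mx c e) = row_mx (col_mx a c) (col_mx b e).
Proof. exact: block_mxEh. Qed.

Ltac formsimp := rewrite /i1 /i2 /i3 /i4; rewrite ?(add_col_mx, opp_col_mx, oppr0, addr0, add0r);
  rewrite ?formE ?(tr_col_mx, trN, mul_row_col, trmx1, trmx0, mul1mx, mulmx1, mul0mx, mulmx0, addr0, add0r, oppr0, subr0, sub0r, mulmxN, mulNmx, opprK).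

Lemma cov_backward d (A : 'M[R]_((d+d)+(d+d))) :
  symplectic A -> (forall z, A *m wvec z = col_mx z 0) ->
  exists A11 A13 A21 : 'M[R]_d,
    [/\ A13^T = A13, A21^T = A21 & A = covariant_form A11 A13 A21].
Proof.
move=> SA Hz.
have H1 : A *m (i1 d + i2 d) = i1 d.
  apply: mx_ext_vec => u; rewrite -mulmxA.
  have -> : (i1 d + i2 d) *m u = wvec (col_mx u 0).
    by rewrite /wvec col_mxKu col_mxKd /i1 /i2 !add_col_mx !mul_col_mx
      !(mul1mx, mul0mx, addr0, add0r, oppr0) col_mx0.
  by rewrite Hz /i1 !mul_col_mx !(mul1mx, mul0mx).
have H2 : A *m (i3 d - i4 d) = i2 d.
  apply: mx_ext_vec => u; rewrite -mulmxA.
  have -> : (i3 d - i4 d) *m u = wvec (col_mx 0 u).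
    by rewrite /wvec col_mxKu col_mxKd /i3 /i4 !opp_col_mx !add_col_mx !mul_col_mx
      !(mul1mx, mul0mx, addr0, add0r, oppr0, subr0, mulNmx) col_mx0.
  by rewrite Hz /i2 !mul_col_mx !(mul1mx, mul0mx).
have eA : A = row_mx (row_mx (A *m i1 d) (A *m i2 d)) (row_mx (A *m i3 d) (A *m i4 d)).
  by rewrite -!mul_mx_row -id_split mulmx1.
have e2 : A *m i2 d = i1 d - A *m i1 d.
  by rewrite -{1}H1 mulmxDr addrAC subrr add0r.
have e4 : A *m i4 d = A *m i3 d - i2 d.
  by rewrite -H2 mulmxBr opprB addrC subrK.
have F1 := form_sympl (i1 d) (i3 d - i4 d) SA.
have F2 := form_sympl (i1 d) (i1 d + i2 d) SA.
have F3 := form_sympl (i3 d) (i3 d - i4 d) SA.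
have F4 := form_sympl (i3 d) (i1 d + i2 d) SA.
have F5 := form_sympl (i1 d) (i1 d) SA.
have F6 := form_sympl (i3 d) (i3 d) SA.
have F7 := form_sympl (i1 d) (i3 d) SA.
rewrite H1 H2 in F1 F2 F3 F4.
rewrite e2 e4 in eA.
have [a11 [a21 [a31 [a41 EC1]]]] := split4 (A *m i1 d).
have [a13 [a23 [a33 [a43 EC3]]]] := split4 (A *m i3 d).
rewrite EC1 EC3 in eA F1 F2 F3 F4 F5 F6 F7.
move: F1 F2 F3 F4 F5 F6 F7; formsimp.
move=> F1 F2 F3 F4 F5 F6 F7.
have h41 : a41 = - 1%:M by apply: trmx_inj; rewrite trN trmx1 -F1 opprK.
have h31 : a31 = 0 by apply: trmx_inj; rewrite trmx0 -[_^T]opprK F2 oppr0.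
have h43 : a43 = 0 by apply: trmx_inj; rewrite trmx0 -[_^T]opprK F3 oppr0.
have h33 : a33 = 1%:M by apply: trmx_inj; rewrite trmx1 -[_^T]opprK F4 opprK.
subst a41 a31 a43 a33.
move: F5 F6 F7; rewrite ?(trN, trmx1, trmx0, mul1mx, mulmx1, mul0mx, mulmx0, addr0, add0r, oppr0, subr0, sub0r, mulmxN, mulNmx, opprK).
move=> F5 F6 F7.
have h23 : a23 = 1%:M - a11^T by rewrite -F7 addrC addKr.
subst a23.
exists a11, a13, a21; split.
- by apply/eqP; rewrite -subr_eq0 F6.
- by apply/eqP; rewrite eq_sym -subr_eq0 addrC F5.
rewrite eA /covariant_form /i1 /i2.
rewrite ?(add_col_mx, opp_col_mx, oppr0, addr0, add0r, subr0, sub0r, opprK).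
rewrite !block_mxEh !col_rowE.
by rewrite addrAC subrr add0r.
Qed.

End P2.

Section P3.
Variable R : realType.

Lemma der_transfer (V W : normedModType R) (f : V -> R) (g : W -> R)
    (x v : V) (y w : W) :
  (forall h : R, f (h *: v + x) = g (h *: w + y)) ->
  (derivable f x v <-> derivable g y w) /\ 'D_v f x = 'D_w g y.
Proof.
move=> H.
have fx : f x = g y by have := H 0; rewrite !scale0r !add0r.
have E : (fun h : R => h^-1 *: ((f \o shift x) (h *: v) - f x)) =
         (fun h : R => h^-1 *: ((g \o shift y) (h *: w) - g y)).
  by apply: funext => h /=; rewrite H fx.
by rewrite /derivable /derive E.
Qed.

Lemma der_affine (V : normedModType R) (f : V -> R) (x v : V) (c : R) :
  (forall h : R, f (h *: v + x) = f x + h * c) ->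
  derivable f x v /\ 'D_v f x = c.
Proof.
move=> H.
have E : \forall h \near 0^', (fun h : R => h^-1 *: ((f \o shift x) (h *: v) - f x)) h = c.
  near=> h => /=; rewrite H addrC addKr /GRing.scale /= mulrA mulVf ?mul1r //.
  near: h; exact: nbhs_dnbhs_neq.
split; first exact: (is_cvg_near_cst c).
exact: lim_near_cst.
Unshelve. all: by end_near.
Qed.

End P3.

Section P4.
Variable R : realType.

Lemma unit_ul d (j : 'I_d) : usubmx (unitv R (lshift d j)) = unitv R j.
Proof. by apply/matrixP => k l; rewrite !mxE (inj_eq (@lshift_inj _ _)). Qed.
Lemma unit_dl d (j : 'I_d) : dsubmx (unitv R (lshift d j)) = 0.
Proof. by apply/matrixP => k l; rewrite !mxE eq_rlshift. Qed.
Lemma unit_ur d (j : 'I_d) : usubmx (unitv R (rshift d j)) = 0.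
Proof. by apply/matrixP => k l; rewrite !mxE eq_lrshift. Qed.
Lemma unit_dr d (j : 'I_d) : dsubmx (unitv R (rshift d j)) = unitv R j.
Proof. by apply/matrixP => k l; rewrite !mxE (inj_eq (@rshift_inj _ _)). Qed.

Lemma split_ord d (i : 'I_(d + d)) :
  {j | i = lshift d j} + {j | i = rshift d j}.
Proof.
case: (splitP i) => j /= eq; [left|right]; exists j; exact: val_inj.
Qed.

Definition lpart d (s : seq 'I_(d+d)) : seq 'I_d :=
  pmap (fun i => if fintype.split i is inl j then Some j else None) s.
Definition rpart d (s : seq 'I_(d+d)) : seq 'I_d :=
  pmap (fun i => if fintype.split i is inr j then Some j else None) s.

Lemma split_l d (j : 'I_d) : fintype.split (lshift d j) = inl j.
Proof. exact: (unsplitK (inl _ j)). Qed.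
Lemma split_r d (j : 'I_d) : fintype.split (rshift d j) = inr j.
Proof. exact: (unsplitK (inr _ j)). Qed.

Lemma comp_u d (A : 'cV[R]_d -> R) (x v : 'cV[R]_(d+d)) :
  (derivable (fun x => A (usubmx x)) x v <-> derivable A (usubmx x) (usubmx v)) /\
  'D_v (fun x => A (usubmx x)) x = 'D_(usubmx v) A (usubmx x).
Proof. by apply: der_transfer => h; rewrite linearD linearZ. Qed.

Lemma comp_d d (A : 'cV[R]_d -> R) (x v : 'cV[R]_(d+d)) :
  (derivable (fun x => A (dsubmx x)) x v <-> derivable A (dsubmx x) (dsubmx v)) /\
  'D_v (fun x => A (dsubmx x)) x = 'D_(dsubmx v) A (dsubmx x).
Proof. by apply: der_transfer => h; rewrite linearD linearZ. Qed.

Definition alld n (a : 'cV[R]_n -> R) :=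
  forall (s : seq 'I_n) (i : 'I_n) (x : 'cV[R]_n), derivable (iD s a) x (unitv R i).

Lemma sep_der d (A B : 'cV[R]_d -> R) (x : 'cV[R]_(d+d)) (i : 'I_(d+d)) :
  (forall j y, derivable A y (unitv R j)) -> (forall j y, derivable B y (unitv R j)) ->
  derivable (fun x => A (usubmx x) * B (dsubmx x)) x (unitv R i) /\
  'D_(unitv R i) (fun x => A (usubmx x) * B (dsubmx x)) x =
   match fintype.split i with
   | inl j => 'D_(unitv R j) A (usubmx x) * B (dsubmx x)
   | inr j => A (usubmx x) * 'D_(unitv R j) B (dsubmx x) end.
Proof.
move=> dA dB.
have -> : (fun x => A (usubmx x) * B (dsubmx x)) =
   ((fun x => A (usubmx x)) * (fun x => B (dsubmx x))) by [].
case: (split_ord i) => [[j ->]|[j ->]].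
- have [[_ dAu] DAu] := comp_u A x (unitv R (lshift d j)).
  have [[_ dBd] DBd] := comp_d B x (unitv R (lshift d j)).
  rewrite unit_ul unit_dl in dAu DAu dBd DBd.
  have da := dAu (dA _ _); have db := dBd (@derivable0 _ _ _ B (dsubmx x)).
  split; first exact: derivableM.
  rewrite deriveM // DAu DBd derive0 split_l /= scaler0 add0r.
  by rewrite /GRing.scale /= mulrC.
- have [[_ dAu] DAu] := comp_u A x (unitv R (rshift d j)).
  have [[_ dBd] DBd] := comp_d B x (unitv R (rshift d j)).
  rewrite unit_ur unit_dr in dAu DAu dBd DBd.
  have da := dAu (@derivable0 _ _ _ A (usubmx x)); have db := dBd (dB _ _).
  split; first exact: derivableM.
  rewrite deriveM // DAu DBd derive0 split_r /= scaler0 addr0.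
  by rewrite /GRing.scale.
Qed.

Lemma iterD_sep d (a b : 'cV[R]_d -> R) :
  alld a -> alld b -> forall s,
  iD s (fun x => a (usubmx x) * b (dsubmx x)) =
  (fun x => iD (lpart s) a (usubmx x) * iD (rpart s) b (dsubmx x)).
Proof.
move=> da db; elim=> [//|i s IH] /=.
rewrite IH; apply: funext => x.
have [_ ->] := sep_der x i (da (lpart s)) (db (rpart s)).
rewrite /lpart /rpart /=.
by case: (fintype.split i).
Qed.

End P4.

Section P5.
Variable R : realType.

Lemma norm_entry m n (M : 'M[R]_(m, n)) i j : `|M i j| <= `|M|.
Proof.
change (`|M i j| <= mx_norm M); rewrite mx_normrE; apply/bigmax_geP; right => /=.
by exists (i, j).
Qed.

Lemma norm_le m n (M : 'M[R]_(m, n)) c :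
  0 <= c -> (forall i j, `|M i j| <= c) -> `|M| <= c.
Proof.
move=> c0 H; change (mx_norm M <= c); rewrite mx_normrE.
by apply: bigmax_le => // ij _; apply: H.
Qed.

Lemma norm_split d (x : 'cV[R]_(d + d)) : `|x| <= `|usubmx x| + `|dsubmx x|.
Proof.
apply: norm_le; first by rewrite addr_ge0.
move=> i j; case: (split_ord i) => [[k ->]|[k ->]].
- have -> : x (lshift d k) j = usubmx x k j by rewrite mxE.
  by apply: le_trans (norm_entry _ _ _) _; rewrite lerDl.
- have -> : x (rshift d k) j = dsubmx x k j by rewrite mxE.
  by apply: le_trans (norm_entry _ _ _) _; rewrite lerDr.
Qed.

Lemma schwartz_sep d (a b : 'cV[R]_d -> R) :
  schwartz_real a -> schwartz_real b ->
  schwartz_real (fun x : 'cV[R]_(d+d) => a (usubmx x) * b (dsubmx x)).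
Proof.
move=> [da ba] [db bb]; split.
- move=> s i x; rewrite (iterD_sep da db).
  by have [] := sep_der x i (da (lpart s)) (db (rpart s)).
- move=> s k; rewrite (iterD_sep da db).
  have [Ma HMa] := ba (lpart s) k; have [Mb HMb] := bb (rpart s) k.
  exists (Ma * Mb) => x.
  set A := iD _ a; set B := iD _ b.
  have h1 : 1 + `|x| <= (1 + `|usubmx x|) * (1 + `|dsubmx x|).
    apply: le_trans (lerD (lexx 1) (norm_split x)) _.
    have := mulr_ge0 (normr_ge0 (usubmx x)) (normr_ge0 (dsubmx x)).
    set p := `|usubmx x|; set q := `|dsubmx x|; move=> pq; nra.
  apply: le_trans (_ : ((1 + `|usubmx x|) ^+ k * `|A (usubmx x)|) *
                       ((1 + `|dsubmx x|) ^+ k * `|B (dsubmx x)|) <= _); last first.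
    apply: ler_pM; [| |exact: HMa|exact: HMb];
      by apply: mulr_ge0 => //; apply: exprn_ge0; apply: addr_ge0.
  rewrite normrM mulrACA -exprMn; apply: ler_wpM2r => //.
  apply: lerXn2r => //; rewrite nnegrE ?mulr_ge0 // addr_ge0.
Qed.

End P5.

Section P6.
Variable R : realType.
Variable d : nat.

Inductive ispoly : ('cV[R]_d -> R) -> Prop :=
| PC c : ispoly (fun _ => c)
| PX i : ispoly (fun x => x i 0)
| PD p q : ispoly p -> ispoly q -> ispoly (fun x => p x + q x)
| PM p q : ispoly p -> ispoly q -> ispoly (fun x => p x * q x).

Lemma poly_der p : ispoly p -> forall i,
  (forall x, derivable p x (unitv R i)) /\
  exists q, ispoly q /\ forall x, 'D_(unitv R i) p x = q x.
Proof.
elim=> [c|j|p1 q1 Q1 H1 Q2 H2|p1 q1 Q1 H1 Q2 H2] i.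
- split=> [x|]; first exact: (derivable_cst c).
  by exists (fun _ => 0); split; [exact: PC|move=> x; exact: (derive_cst c)].
- have H : forall x, derivable (fun x : 'cV[R]_d => x j 0) x (unitv R i) /\
     'D_(unitv R i) (fun x : 'cV[R]_d => x j 0) x = ((j == i) && (0 == 0 :> 'I_1))%:R.
    move=> x; apply: der_affine => h; rewrite !mxE addrC; congr (_ + _).
  split=> [x|]; first by case: (H x).
  exists (fun _ => ((j == i) && (0 == 0 :> 'I_1))%:R); split; first exact: PC.
  by move=> x; case: (H x).
- have [d1 [r1 [P1 E1]]] := H1 i; have [d2 [r2 [P2 E2]]] := H2 i.
  have -> : (fun x => p1 x + q1 x) = p1 + q1 by [].
  split=> [x|]; first exact: derivableD.
  exists (fun x => r1 x + r2 x); split; first exact: PD.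
  by move=> x; rewrite deriveD; [rewrite E1 E2|apply: d1|apply: d2].
- have [d1 [r1 [P1 E1]]] := H1 i; have [d2 [r2 [P2 E2]]] := H2 i.
  have -> : (fun x => p1 x * q1 x) = p1 * q1 by [].
  split=> [x|]; first exact: derivableM.
  exists (fun x => p1 x * r2 x + q1 x * r1 x); split.
    by apply: PD; apply: PM.
  by move=> x; rewrite deriveM; [rewrite E1 E2|apply: d1|apply: d2].
Qed.

End P6.

Section P7.
Variable R : realType.

Definition gauss d (x : 'cV[R]_d) : R := expR (- dotp x x).

Lemma dotp_unit d (i : 'I_d) (x : 'cV[R]_d) : dotp (unitv R i) x = x i 0.
Proof.
rewrite /dotp (bigD1 i) //= big1 ?addr0; first by rewrite mxE eqxx mul1r.
by move=> j ji; rewrite mxE (negbTE ji) mul0r.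
Qed.

Lemma dotpZl d (h : R) (x y : 'cV[R]_d) : dotp (h *: x) y = h * dotp x y.
Proof. by rewrite /dotp mulr_sumr; apply: eq_bigr => j _; rewrite mxE mulrA. Qed.

Lemma dotpZr d (h : R) (x y : 'cV[R]_d) : dotp x (h *: y) = h * dotp x y.
Proof. by rewrite dotpC dotpZl dotpC. Qed.

Lemma gauss_shift d (i : 'I_d) (x : 'cV[R]_d) (h : R) :
  gauss (h *: unitv R i + x) = gauss x * expR (- (2 * x i 0 * h + h * h)).
Proof.
rewrite /gauss -expRD; congr expR.
rewrite !(dotpDr, dotpDl, dotpZl, dotpZr) dotp_unit (dotpC x) dotp_unit.
rewrite !mxE eqxx /=; ring.
Qed.

Lemma gauss_der d (i : 'I_d) (x : 'cV[R]_d) :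
  derivable (@gauss d) x (unitv R i) /\
  'D_(unitv R i) (@gauss d) x = - (2 * x i 0) * gauss x.
Proof.
set a := x i 0.
pose g := cst (gauss x) * (expR \o (- ((2 * a) \*: id + id * id))).
have Hg : is_derive (0:R) 1 g (- (2 * a) * gauss x).
  apply: is_derive_eq.
  rewrite /cst /= !fctE /= !(scaler0, scale0r, mulr0, addr0, oppr0, expR0, mul1r, add0r).
  by rewrite /GRing.scale /= mulr1 mulrC.
have H : forall h : R, gauss (h *: unitv R i + x) = g (h *: 1 + 0).
  move=> h; rewrite gauss_shift /g /= !fctE /= addr0.
  by rewrite /GRing.scale /= mulr1.
have [[_ D1] D2] := @der_transfer R _ _ (@gauss d) g x (unitv R i) 0 1 H.
split; first exact: D1.
by rewrite D2 derive_val.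
Qed.

End P7.

Section P8.
Variable R : realType.
Variable d : nat.

Lemma iD_gauss (s : seq 'I_d) :
  (forall i x, derivable (iD s (@gauss R d)) x (unitv R i)) /\
  exists p, ispoly p /\ iD s (@gauss R d) = (fun x => p x * gauss x).
Proof.
have Dp : forall p, ispoly p -> forall i, exists q, ispoly q /\ forall x,
    derivable (fun x => p x * @gauss R d x) x (unitv R i) /\
    'D_(unitv R i) (fun x => p x * @gauss R d x) x = q x * gauss x.
  move=> p Pp i.
  have [dp [q [Pq Eq]]] := poly_der Pp i.
  exists (fun x => q x + (-2 * x i 0) * p x); split.
    by apply: PD => //; apply: PM => //; apply: PM; [exact: PC|exact: PX].
  move=> x; have [dg Dg] := gauss_der i x.
  have -> : (fun x => p x * @gauss R d x) = p * (@gauss R d) by [].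
  split; first exact: derivableM.
  rewrite deriveM // Dg Eq /GRing.scale /=; ring.
elim: s => [|i s [_ [p [Pp Ep]]]] /=.
  split; first by move=> i x; case: (gauss_der i x).
  by exists (fun _ => 1); split; [exact: PC|apply: funext => x; rewrite mul1r].
rewrite Ep; have [q [Pq Hq]] := Dp p Pp i.
have -> : (fun x => 'D_(unitv R i) (fun x0 => p x0 * gauss x0) x) =
          (fun x => q x * gauss x).
  by apply: funext => x; case: (Hq x).
split; last by exists q.
move=> j x; have [r [Pr Hr]] := Dp q Pq j; by case: (Hr x).
Qed.

End P8.

Section P9.
Variable R : realType.

Lemma poly_bound d (p : 'cV[R]_d -> R) : ispoly p ->
  exists C N, 0 <= C /\ forall x, `|p x| <= C * (1 + `|x|) ^+ N.
Proof.
have r1 : forall x : 'cV[R]_d, 1 <= 1 + `|x| by move=> x; rewrite lerDl.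
have r0 : forall x : 'cV[R]_d, 0 <= 1 + `|x| by move=> x; rewrite addr_ge0.
elim=> [c|i|p1 q1 _ [C1 [N1 [C10 H1]]] _ [C2 [N2 [C20 H2]]]
          |p1 q1 _ [C1 [N1 [C10 H1]]] _ [C2 [N2 [C20 H2]]]].
- by exists `|c|, 0%N; split => // x; rewrite expr0 mulr1.
- exists 1, 1%N; split => // x; rewrite expr1 mul1r.
  by apply: le_trans (norm_entry _ _ _) _; rewrite lerDr.
- exists (C1 + C2), (N1 + N2)%N; split; first by rewrite addr_ge0.
  move=> x; apply: le_trans (ler_normD _ _) _; rewrite mulrDl.
  apply: lerD.
    apply: le_trans (H1 x) _; apply: ler_wpM2l => //.
    by apply: ler_weXn2l => //; rewrite leq_addr.
  apply: le_trans (H2 x) _; apply: ler_wpM2l => //.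
  by apply: ler_weXn2l => //; rewrite leq_addl.
- exists (C1 * C2), (N1 + N2)%N; split; first by rewrite mulr_ge0.
  move=> x; rewrite normrM exprD mulrACA.
  exact: (ler_pM (normr_ge0 _) (normr_ge0 _) (H1 x) (H2 x)).
Qed.

Lemma pow_le_exp m (y : R) : 0 <= y -> y ^+ m <= m`!%:R * expR y.
Proof.
move=> y0; case: m => [|n].
  by rewrite expr0 fact0 mul1r -expR0 ler_expR.
have := expR_ge1Dxn n y0.
rewrite -(ler_pM2l (_ : 0 < n.+1`!%:R)) ?ltr0n ?fact_gt0 //.
move=> H; apply: le_trans H; rewrite mulrDr mulr1 mulrCA mulfV ?pnatr_eq0 -?lt0n ?fact_gt0 //.
by rewrite ?mulr1 lerDr ler0n.
Qed.

Lemma decay m : exists K, forall r : R, 0 <= r -> (1 + r) ^+ m * expR (- (r ^+ 2)) <= K.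
Proof.
exists (2 ^+ m * m`!%:R) => r r0.
have e0 : 0 <= expR (- (r ^+ 2)) := expR_ge0 _.
have f1 : 1 <= m`!%:R :> R by rewrite ler1n fact_gt0.
case: (lerP r 1) => r1.
- apply: le_trans (_ : 2 ^+ m * 1 <= _); last by rewrite ler_wpM2l // exprn_ge0.
  apply: ler_pM; rewrite ?exprn_ge0 ?addr_ge0 //.
    by apply: lerXn2r; rewrite ?nnegrE ?addr_ge0 //; lra.
  by rewrite expR_le1 oppr_le0 sqr_ge0.
- have h1 : (1 + r) ^+ m <= 2 ^+ m * (r ^+ 2) ^+ m.
    rewrite -exprMn; apply: lerXn2r; rewrite ?nnegrE ?addr_ge0 ?mulr_ge0 ?sqr_ge0 //.
    by nra.
  apply: le_trans (ler_wpM2r e0 h1) _.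
  rewrite -mulrA ler_wpM2l ?exprn_ge0 //.
  have H := ler_wpM2r e0 (pow_le_exp m (sqr_ge0 r)).
  by rewrite -mulrA expRxMexpNx_1 mulr1 in H.
Qed.

Lemma gauss_le d (x : 'cV[R]_d) : gauss x <= expR (- (`|x| ^+ 2)).
Proof.
rewrite /gauss ler_expR lerN2.
case: (eqVneq (mx_norm x) 0) => [n0|nn0].
  have -> : `|x| = 0 by exact: n0.
  rewrite expr0n /= /dotp; apply: sumr_ge0 => i _; by rewrite -expr2 sqr_ge0.
have [[k l] /= Hk] := mx_norm_neq0 nn0.
have -> : `|x| = `|x k l| by exact: Hk.
rewrite (ord1 l) real_normK ?num_real // /dotp (bigD1 k) //= expr2 lerDl.
by apply: sumr_ge0 => i _; rewrite -expr2 sqr_ge0.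
Qed.

End P9.

Section P10.
Variable R : realType.

Lemma schwartz_gauss d : schwartz_real (@gauss R d).
Proof.
split; first by move=> s i x; case: (@iD_gauss R d s) => H _; exact: H.
move=> s k.
have [_ [p [Pp ->]]] := @iD_gauss R d s.
have [C [N [C0 HC]]] := poly_bound Pp.
have [K HK] := @decay R (k + N).
exists (C * K) => x.
have g0 : 0 <= gauss x by exact: expR_ge0.
have r0 : 0 <= 1 + `|x| by rewrite addr_ge0.
rewrite normrM (ger0_norm g0).
apply: le_trans (_ : (1 + `|x|) ^+ k * (C * (1 + `|x|) ^+ N) * gauss x <= _).
  rewrite mulrA; apply: ler_wpM2r => //.
  by apply: ler_wpM2l; [exact: exprn_ge0|exact: HC].
rewrite mulrCA -exprD -mulrA; apply: ler_wpM2l => //.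
apply: le_trans (HK _ (normr_ge0 x)).
by apply: ler_wpM2l; [exact: exprn_ge0|exact: gauss_le].
Qed.

Lemma iD0 n (s : seq 'I_n) : iD s (fun _ : 'cV[R]_n => 0) = (fun _ => 0).
Proof.
elim: s => [//|i s IH] /=; rewrite IH; apply: funext => x.
exact: (derive_cst (0 : R)).
Qed.

Lemma schwartz0 n : schwartz_real (fun _ : 'cV[R]_n => 0).
Proof.
split=> [s i x|s k]; rewrite iD0; first exact: (derivable_cst (0 : R)).
by exists 0 => x; rewrite normr0 mulr0.
Qed.

Definition gaussC d (x : 'cV[R]_d) : R[i] := Complex (gauss x) 0.

Lemma Schwartz_gaussC d : Schwartz (@gaussC d).
Proof. split; [exact: schwartz_gauss|exact: schwartz0]. Qed.

Lemma schwartz_add n (a b : 'cV[R]_n -> R) :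
  schwartz_real a -> schwartz_real b -> schwartz_real (fun x => a x + b x).
Proof.
move=> [da ba] [db bb].
have E : forall s, iD s (fun x => a x + b x) = (fun x => iD s a x + iD s b x).
  elim=> [//|i s IH] /=; rewrite IH; apply: funext => x.
  have -> : (fun x => iD s a x + iD s b x) = iD s a + iD s b by [].
  by rewrite deriveD.
split=> [s i x|s k]; rewrite E.
  have -> : (fun x => iD s a x + iD s b x) = iD s a + iD s b by [].
  exact: derivableD.
have [Ma HMa] := ba s k; have [Mb HMb] := bb s k.
exists (Ma + Mb) => x; apply: le_trans (_ : (1 + `|x|) ^+ k * (`|iD s a x| + `|iD s b x|) <= _).
  by apply: ler_wpM2l; [apply: exprn_ge0; rewrite addr_ge0|exact: ler_normD].
by rewrite mulrDr; apply: lerD.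
Qed.

Lemma schwartz_opp n (a : 'cV[R]_n -> R) :
  schwartz_real a -> schwartz_real (fun x => - a x).
Proof.
move=> [da ba].
have E : forall s, iD s (fun x => - a x) = (fun x => - iD s a x).
  elim=> [//|i s IH] /=; rewrite IH; apply: funext => x.
  have -> : (fun x => - iD s a x) = - iD s a by [].
  by rewrite deriveN.
split=> [s i x|s k]; rewrite E.
  have -> : (fun x => - iD s a x) = - iD s a by [].
  exact: derivableN.
have [Ma HMa] := ba s k.
by exists Ma => x; rewrite normrN.
Qed.

Lemma Schwartz_tens d (f g : 'cV[R]_d -> R[i]) :
  Schwartz f -> Schwartz g -> Schwartz (tens f g).
Proof.
move=> [rf imf] [rg img]; split.
- have H := schwartz_add (schwartz_sep rf rg) (schwartz_sep imf img).
  have -> : (fun x => complex.Re (tens f g x)) =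
    (fun x => complex.Re (f (usubmx x)) * complex.Re (g (dsubmx x)) +
              complex.Im (f (usubmx x)) * complex.Im (g (dsubmx x))).
    apply: funext => x; rewrite /tens.
    by case: (f (usubmx x)) => a1 a2; case: (g (dsubmx x)) => b1 b2 /=; ring.
  exact: H.
- have H := schwartz_add (schwartz_sep imf rg) (schwartz_opp (schwartz_sep rf img)).
  have -> : (fun x => complex.Im (tens f g x)) =
    (fun x => complex.Im (f (usubmx x)) * complex.Re (g (dsubmx x)) +
              - (complex.Re (f (usubmx x)) * complex.Im (g (dsubmx x)))).
    apply: funext => x; rewrite /tens.
    by case: (f (usubmx x)) => a1 a2; case: (g (dsubmx x)) => b1 b2 /=; ring.
  exact: H.
Qed.

End P10.

Section P11.
Variable R : realType.

Definition Nc (z : R[i]) : R := complex.Re z ^+ 2 + complex.Im z ^+ 2.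

Lemma Nc_cis (a : R) z : Nc (cis a * z) = Nc z.
Proof.
case: z => x y; rewrite /Nc /cis /=.
rewrite -[RHS]mul1r -(cos2Dsin2 a); ring.
Qed.

Lemma Nc_pos (z : R[i]) : z != 0 -> 0 < Nc z.
Proof.
case: z => x y; rewrite /Nc /= => nz.
have : (x != 0) || (y != 0).
  by apply: contraNT nz; rewrite negb_or !negbK => /andP[/eqP -> /eqP ->]; apply/eqP.
move=> /orP[] h.
- have : 0 < x ^+ 2 by rewrite lt_neqAle sqr_ge0 andbT eq_sym sqrf_eq0.
  by have := sqr_ge0 y; lra.
- have : 0 < y ^+ 2 by rewrite lt_neqAle sqr_ge0 andbT eq_sym sqrf_eq0.
  by have := sqr_ge0 x; lra.
Qed.

Lemma Nc_decay n (G : 'cV[R]_n -> R[i]) : Schwartz G ->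
  exists M, forall x, (1 + `|x|) * Nc (G x) <= M.
Proof.
move=> [[_ bre] [_ bim]].
have [A1 HA1] := bre [::] 1%N; have [A0 HA0] := bre [::] 0%N.
have [B1 HB1] := bim [::] 1%N; have [B0 HB0] := bim [::] 0%N.
exists (A1 * A0 + B1 * B0) => x.
have r0 : 0 <= 1 + `|x| by rewrite addr_ge0.
move: (HA1 x) (HA0 x) (HB1 x) (HB0 x); rewrite /= expr1 expr0 !mul1r.
set a := complex.Re (G x); set b := complex.Im (G x) => h1 h2 h3 h4.
rewrite /Nc -/a -/b -(real_normK (num_real a)) -(real_normK (num_real b)) mulrDr !expr2 !mulrA.
apply: lerD.
  by apply: ler_pM => //; apply: mulr_ge0.
by apply: ler_pM => //; apply: mulr_ge0.
Qed.

Lemma cont_line n (f : 'cV[R]_n -> R) x v : derivable f x v -> f x != 0 ->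
  exists2 e : R, 0 < e & forall h : R, `|h| < e -> f (h *: v + x) != 0.
Proof.
move=> D fx0.
have C : {for 0, continuous (fun h : R => f (h *: v + x))}.
  exact/differentiable_continuous/derivable1_diffP/(derivable1P _ _ _).1.
have fx : 0 < `|f x| by rewrite normr_gt0.
move/cvgr_dist_lt: C => /(_ _ fx).
rewrite scale0r add0r => /nbhs_ballP [e e0 He].
exists e => // h he; apply/negP => /eqP fh.
have := He h; rewrite -ball_normE /ball_ /= sub0r normrN => /(_ he).
by rewrite fh subr0 ltxx.
Qed.

Lemma sin_neq0 (x : R) : 0 < `|x| < pi -> sin x != 0.
Proof.
case: (ltrgtP x 0) => [xn|xp|->]; last by rewrite normr0 ltxx.
- rewrite ltr0_norm // => /andP[_ h]; rewrite -(opprK x) sinN oppr_eq0.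
  by rewrite gt_eqF // sin_gt0_pi // oppr_gt0 xn.
- rewrite gtr0_norm // => /andP[_ h].
  by rewrite gt_eqF // sin_gt0_pi // xp.
Qed.

End P11.

Section P12.
Variable R : realType.

Lemma rho_inj n (G : 'cV[R]_n -> R[i]) (p q : 'cV[R]_(n + n)) :
  Schwartz G -> (exists t, G t != 0) -> rho p G = rho q G -> p = q.
Proof.
move=> SG [s0 Gs0] E.
pose p1 := usubmx p; pose p2 := dsubmx p; pose q1 := usubmx q; pose q2 := dsubmx q.
have Et : forall t, cis (- pi * dotp p1 p2) * (cis (2 * pi * dotp p2 t) * G (t - p1)) =
    cis (- pi * dotp q1 q2) * (cis (2 * pi * dotp q2 t) * G (t - q1)).
  by move=> t; move: (congr1 (fun F => F t) E); rewrite /rho /tfshift /Mod /Tr.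
have e1 : p1 = q1.
  have NE : forall s, Nc (G s) = Nc (G (s + (p1 - q1))).
    move=> s; move: (Et (s + p1)) => /(congr1 (@Nc R)); rewrite !Nc_cis addrK.
    by rewrite addrA.
  set δ := p1 - q1 in NE *.
  have NK : forall k, Nc (G s0) = Nc (G (s0 + δ *+ k)).
    elim=> [|k IH]; first by rewrite mulr0n addr0.
    by rewrite IH NE mulrSr -addrA.
  case: (eqVneq δ 0) => [/eqP|dn0].
    by rewrite subr_eq0 => /eqP.
  exfalso.
  have [M HM] := Nc_decay SG.
  have N0 := Nc_pos Gs0.
  have dpos : 0 < `|δ| by rewrite normr_gt0.
  have M0 : 0 <= M.
    apply: le_trans (HM s0); apply: mulr_ge0; [rewrite addr_ge0 //|exact: ltW N0].
  pose X := (M / Nc (G s0) + `|s0|) / `|δ|.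
  have X0 : 0 <= X by rewrite /X divr_ge0 ?(ltW dpos) // addr_ge0 // divr_ge0 // ltW.
  have hk := archi_boundP X0.
  set k := Num.Def.archi_bound X in hk.
  have H := HM (s0 + δ *+ k); rewrite -NK in H.
  have h1 := ler_normB (s0 + δ *+ k) s0.
  rewrite addrC addKr normrMn -mulr_natl in h1.
  rewrite /X ltr_pdivrMr // in hk.
  set Y := `|s0 + δ *+ k| in H h1.
  have h2 : M / Nc (G s0) < Y.
    by have := lt_le_trans hk h1; rewrite ltrD2r.
  rewrite ltr_pdivrMr // in h2.
  rewrite mulrDl mul1r in H.
  have := le_lt_trans H h2; rewrite -subr_lt0 addrK.
  by rewrite ltNge (ltW N0).
pose alpha t := (- pi * dotp p1 p2 + 2 * pi * dotp p2 t) -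
                 (- pi * dotp p1 q2 + 2 * pi * dotp q2 t).
have phase : forall t, G (t - p1) != 0 -> cis (alpha t) = 1.
  move=> t nz; have := Et t; rewrite -e1 !mulrA -!cisD => /(mulIf nz) h.
  by rewrite /alpha cisD h cisN_mul.
have cisN1 : forall a : R, cis a = 1 -> cis (- a) = 1.
  by move=> a ca; have := cisN_mul a; rewrite ca mul1r.
have key : forall i, (p2 - q2) i 0 = 0.
  move=> i; case: (eqVneq ((p2 - q2) i 0) 0) => // nzi; exfalso.
  have [e e0 He] : exists2 e : R, 0 < e &
      forall h : R, `|h| < e -> G (h *: unitv R i + s0) != 0.
    case: SG => [[dre _] [dim _]].
    have : (complex.Re (G s0) != 0) || (complex.Im (G s0) != 0).
      apply: contraNT Gs0; rewrite negb_or !negbK => /andP[/eqP a /eqP b].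
      by move: a b; case: (G s0) => x y /= -> ->; apply/eqP.
    case/orP => hh.
    - have [e e0 He] := cont_line (dre [::] i s0) hh.
      exists e => // h' /He; apply: contra => /eqP EG; rewrite /= EG; exact: eqxx.
    - have [e e0 He] := cont_line (dim [::] i s0) hh.
      exists e => // h' /He; apply: contra => /eqP EG; rewrite /= EG; exact: eqxx.
  set D := (p2 - q2) i 0 in nzi *.
  have Dn : 0 < `|D| by rewrite normr_gt0.
  pose P := e * `|D|.
  have P0 : 0 < P by rewrite mulr_gt0.
  pose h := e / (2 + 4 * P).
  have c0 : 0 < 2 + 4 * P by lra.
  have h0 : 0 < h by rewrite divr_gt0.
  have he : `|h| < e.
    rewrite gtr0_norm // ltr_pdivrMr // -{1}(mulr1 e) ltr_pM2l //; lra.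
  have hD : h * `|D| < 1 / 4.
    rewrite /h mulrAC -/P ltr_pdivrMr //; lra.
  clearbody h.
  have c1 := phase (h *: unitv R i + s0 + p1).
  rewrite addrK in c1; have {c1} c1 := c1 (He h he).
  have c2 := phase (s0 + p1); rewrite addrK in c2; have {c2} c2 := c2 Gs0.
  have : cis (2 * pi * (h * D)) = 1.
    have -> : 2 * pi * (h * D) = alpha (h *: unitv R i + s0 + p1) + - alpha (s0 + p1).
      rewrite /alpha !dotpDr !dotpZr (dotpC p2 (unitv R i)) (dotpC q2 (unitv R i)).
      rewrite !dotp_unit /D !mxE; ring.
    by rewrite cisD c1 (cisN1 _ c2) mulr1.
  move/cis_eq1; apply/eqP; apply: sin_neq0.
  rewrite !normrM (gtr0_norm h0) (gtr0_norm (@pi_gt0 R)) (@gtr0_norm _ 2) //.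
  have p0 := @pi_gt0 R.
  apply/andP; split.
    apply: mulr_gt0; last exact: mulr_gt0.
    by apply: mulr_gt0.
  have hD' : pi * (h * `|D|) < pi * (1 / 4) by rewrite ltr_pM2l.
  apply: (@lt_trans _ _ (2 * (pi * (1 / 4)))).
    by rewrite -mulrA ltr_pM2l.
  lra.
rewrite -(vsubmxK p) -(vsubmxK q) -/p1 -/p2 -/q1 -/q2 e1.
have -> : p2 = q2.
  apply/matrixP => i j; rewrite (ord1 j); have := key i; rewrite !mxE.
  by move/eqP; rewrite subr_eq0 => /eqP.
by [].
Qed.

End P12.

Theorem mainTheorem4 (R : realType) (d : nat)
    (A : 'M[R]_((d + d) + (d + d)))
    (U : ('cV[R]_(d + d) -> R[i]) -> ('cV[R]_(d + d) -> R[i])) :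
  symplectic A -> metaplectic A U ->
  ((forall (f g : 'cV[R]_d -> R[i]), Schwartz f -> Schwartz g ->
      forall z : 'cV[R]_(d + d),
        U (tens (tfshift z f) (tfshift z g)) = Tr z (U (tens f g)))
   <->
   exists A11 A13 A21 : 'M[R]_d,
     [/\ A13^T = A13, A21^T = A21 & A = covariant_form A11 A13 A21]).
Proof.
move=> SA [Ulin USch Uinj Usurj Uint]; split.
- move=> Hcov; apply: cov_backward => // z.
  have Sf0 : Schwartz (@gaussC R d) := @Schwartz_gaussC R d.
  have SF : Schwartz (tens (@gaussC R d) (@gaussC R d)) := Schwartz_tens Sf0 Sf0.
  have S0 : Schwartz (fun _ : 'cV[R]_(d + d) => (0 : R[i])).
    by split; exact: schwartz0.
  have U0 : U (fun _ => 0) = (fun _ => 0).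
    have := Ulin _ _ 0 0 S0 S0.
    have -> : (fun t : 'cV[R]_(d + d) => 0 * 0 + 0 * 0) = (fun _ => 0 : R[i]).
      by apply: funext => t; rewrite mul0r addr0.
    move=> ->; apply: funext => t; by rewrite !mul0r addr0.
  have nzUF : exists t, U (tens (@gaussC R d) (@gaussC R d)) t != 0.
    case: (pselect (exists t, U (tens (@gaussC R d) (@gaussC R d)) t != 0)) => // nz.
    exfalso.
    have UF0 : U (tens (@gaussC R d) (@gaussC R d)) = U (fun _ => 0).
      rewrite U0; apply: funext => t; apply/eqP; apply/negPn/negP => h.
      by apply: nz; exists t.
    have := Uinj _ _ SF S0 UF0 => /(congr1 (fun F => complex.Re (F 0))) /=.
    rewrite /tens /gaussC /=; set a := gauss _; set b := gauss _.
    have a0 : 0 < a by exact: expR_gt0.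
    have b0 : 0 < b by exact: expR_gt0.
    by rewrite oppr0 !mulr0 subr0 => ab; move: (mulr_gt0 a0 b0); rewrite ab ltxx.
  have E1 := Hcov _ _ Sf0 Sf0 z.
  rewrite tens_shift (Uint _ _ SF) Tr_rho in E1.
  exact: rho_inj (USch _ SF) nzUF E1.
- move=> [A11 [A13 [A21 [s13 s21 eA]]]] f g Sf Sg z.
  by rewrite tens_shift (Uint _ _ (Schwartz_tens Sf Sg)) Tr_rho eA cov_w.
Qed.
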